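(* Let $a,b\in\mathbb{B}^2$ with $a\neq b$, and let $m=d(\{0\},L[a,b])$ be the Euclidean distance from the origin to the line $L[a,b]$ through $a$ and $b$. Then $$\tan\frac{v_{\mathbb{B}^2}(a,b)}{2}=\frac{\sqrt{1+m}}{\sqrt{1-m}}\,\operatorname{th}\frac{h_{\mathbb{B}^2}(a,b)}{4}.$$
   Context: $\mathbb{B}^2$ is the open unit disk in $\mathbb{C}$ and $\operatorname{th}$ is the hyperbolic tangent. For distinct $a,b\in\mathbb{B}^2$ the Hilbert metric is $h_{\mathbb{B}^2}(a,b)=\log\frac{|u-b||a-v|}{|u-a||b-v|}$, where $u,v$ are the two intersection points of the line $L[a,b]$ with the unit circle, labelled so that $|u-a|<|u-b|$; also $h_{\mathbb{B}^2}(a,a)=0$. The visual angle metric is $v_{\mathbb{B}^2}(a,b)=\sup\{\measuredangle(a,z,b): z\in\partial\mathbb{B}^2\}$, where $\measuredangle(a,z,b)$ is the angle at $z$ between the segments $[z,a]$ and $[z,b]$. *)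

(* Defs.v *)
From Stdlib Require Import Reals.
From Coquelicot Require Import Coquelicot.
Open Scope R_scope.

Definition pt := (R * R)%type.
Definition psub (p q : pt) : pt := (fst p - fst q, snd p - snd q).
Definition dot (p q : pt) : R := fst p * fst q + snd p * snd q.
Definition enorm (p : pt) : R := sqrt (dot p p).
Definition edist (p q : pt) : R := enorm (psub p q).

Definition in_disk (p : pt) : Prop := enorm p < 1.
Definition on_circle (p : pt) : Prop := enorm p = 1.

Definition on_line (a b p : pt) : Prop :=
  exists t : R, p = (fst a + t * (fst b - fst a), snd a + t * (snd b - snd a)).

Definition th (x : R) : R := (exp x - exp (- x)) / (exp x + exp (- x)).

Definition angle (a z b : pt) : R :=
  acos (dot (psub a z) (psub b z) / (enorm (psub a z) * enorm (psub b z))).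

Definition visual_angle (a b : pt) : R :=
  real (Lub_Rbar (fun r => exists z, on_circle z /\ r = angle a z b)).

Definition dist0_line (a b : pt) : R :=
  real (Glb_Rbar (fun r => exists p, on_line a b p /\ r = enorm p)).

(* Hilbert metric of the disk: u, v are the two intersection points of
   L[a,b] with the unit circle, labelled so that |u-a| < |u-b|. *)
Definition hilbert_endpoints (a b u v : pt) : Prop :=
  on_line a b u /\ on_line a b v /\ on_circle u /\ on_circle v /\ u <> v /\
  edist u a < edist u b.

Definition hilbert_formula (a b u v : pt) : R :=
  ln ((edist u b * edist a v) / (edist u a * edist b v)).

(* Main.v *)
Require Import Defs.
From Stdlib Require Import Reals Lra Psatz.
From Coquelicot Require Import Coquelicot.
Open Scope R_scope.

Lemma tang_id (A B m k : R) : 1 - m*m <> 0 ->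
  k*k = ((1-m*m) - A*A)*((1-m*m) - B*B) ->
  let g := (k - m*((1-m*m) - A*B))/(1-m*m) in
  (A*B+m*m+1+g*m)^2 = (A+B)^2 + (2*m+g)^2.
Proof.
  intros Hl Hk g.
  assert (E: (A*B+m*m+1+g*m)^2 - ((A+B)^2 + (2*m+g)^2)
     = - (k*k - ((1-m*m) - A*A)*((1-m*m) - B*B))/(1-m*m)).
  { unfold g. field. exact Hl. }
  rewrite Hk in E. replace (- (((1-m*m) - A*A)*((1-m*m) - B*B) - ((1-m*m) - A*A)*((1-m*m) - B*B)) / (1 - m * m)) with 0 in E by (field; exact Hl).
  lra.
Qed.

Lemma T_id (P Q l m : R) : l*l = (1-m)*(1+m) -> l <> 0 -> P+Q <> 0 ->
  2 * ((P*Q - m*((P*P+Q*Q)/2))/(l*l)) * ((1+m)*(P-Q)/(l*(P+Q))) =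
  (P*P-Q*Q)/(2*l) * (1 - ((1+m)*(P-Q)/(l*(P+Q)))^2).
Proof.
  intros Hl Hl0 HPQ.
  assert (key: l*l*(P+Q)^2 - (1+m)^2*(P-Q)^2 = 4*(1+m)*(P*Q - m*((P*P+Q*Q)/2))).
  { rewrite Hl. field. }
  replace (1 - ((1+m)*(P-Q)/(l*(P+Q)))^2) with ((l*l*(P+Q)^2 - (1+m)^2*(P-Q)^2)/(l*l*(P+Q)^2)) by (field; auto).
  rewrite key. field. auto.
Qed.


Definition gg (A B m l P Q : R) := (P*Q - m*(l*l - A*B))/(l*l).
Definition RR (A B m l P Q : R) := A*B + m*m + 1 + gg A B m l P Q * m.

Section Core.
Variables A B m l P Q : R.
Hypotheses (Hl: 0 < l) (Hm: 0 <= m) (Hlm: l*l + m*m = 1) (HA: -l < A) (HAB: A < B) (HB: B < l)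
  (HP0: 0 <= P) (HQ0: 0 <= Q) (HP: P*P = (l+B)*(l-A)) (HQ: Q*Q = (l+A)*(l-B)).

Lemma core_k : (P*Q)*(P*Q) = ((1-m*m) - A*A)*((1-m*m)-B*B).
Proof.
  replace ((P*Q)*(P*Q)) with ((P*P)*(Q*Q)) by ring. rewrite HP, HQ.
  replace (1-m*m) with (l*l) by lra. ring.
Qed.

Lemma core_tang : (RR A B m l P Q)^2 = (A+B)^2 + (2*m + gg A B m l P Q)^2.
Proof.
  unfold RR, gg. replace (l*l) with (1-m*m) by lra.
  pose proof (tang_id A B m (P*Q) ltac:(nra) core_k) as H. cbv zeta in H. exact H.
Qed.

Lemma core_ks : P*Q <= l*l - A*B.
Proof.
  assert (0 <= P*Q) by nra.
  assert (Hk: (P*Q)*(P*Q) = (l*l-A*B)^2 - l*l*(B-A)^2).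
  { replace ((P*Q)*(P*Q)) with ((P*P)*(Q*Q)) by ring. rewrite HP, HQ. ring. }
  assert (0 < l*l - A*B) by nra.
  assert (H2: (P*Q)*(P*Q) <= (l*l-A*B)*(l*l-A*B)).
  { rewrite Hk. assert (0 <= l*l*(B-A)^2) by (apply Rmult_le_pos; nra). nra. }
  destruct (Rle_or_lt (P*Q) (l*l-A*B)); auto.
  assert ((l*l-A*B)*(l*l-A*B) < (P*Q)*(P*Q)) by (apply Rmult_le_0_lt_compat; lra). lra.
Qed.

Lemma core_R : 0 < RR A B m l P Q <= 2.
Proof.
  pose proof core_ks.
  assert (E: RR A B m l P Q = (2*(l*l) + m*(P*Q) - (l*l-A*B))/(l*l)).
  { assert (E0: RR A B m l P Q - (2*(l*l) + m*(P*Q) - (l*l-A*B))/(l*l) = A*B*(l*l+m*m-1)/(l*l)).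
    { unfold RR, gg. field. nra. }
    rewrite Hlm in E0. replace (A*B*(1-1)/(l*l)) with 0 in E0 by (field; nra). lra. }
  assert (0 < l*l) by nra.
  assert (m <= 1) by nra.
  assert (0 <= P*Q) by nra.
  assert (l*l - A*B < 2*(l*l)) by nra.
  rewrite E. split.
  - apply Rdiv_lt_0_compat; nra.
  - apply Rmult_le_reg_r with (l*l); auto. unfold Rdiv. rewrite Rmult_assoc, Rinv_l by lra. nra.
Qed.

Lemma core_G : forall x y, 1 <= x*x+y*y -> 0 <= (A-x)*(B-x) + (y-m)^2 - gg A B m l P Q*(y-m).
Proof.
  intros x y Hr.
  pose proof core_tang as Ht. pose proof core_R as [HR1 HR2].
  set (g := gg A B m l P Q) in *. set (Rv := RR A B m l P Q) in *.
  assert (E: (A-x)*(B-x) + (y-m)^2 - g*(y-m) = (x*x+y*y) - 1 + Rv - ((A+B)*x + (2*m+g)*y)).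
  { unfold Rv, RR. fold g. ring. }
  rewrite E. set (V := (A+B)*x + (2*m+g)*y). set (rho := x*x+y*y). assert (Hr' : 1 <= rho) by (unfold rho; lra).
  assert (HV: V*V <= Rv^2 * rho).
  { rewrite Ht. unfold V, rho.
    assert (0 <= ((A+B)*y - (2*m+g)*x)^2) by apply pow2_ge_0.
    replace (((A + B) ^ 2 + (2 * m + g) ^ 2) * (x * x + y * y)) with
      (((A+B)*x + (2*m+g)*y)*((A+B)*x + (2*m+g)*y) + ((A+B)*y - (2*m+g)*x)^2) by ring.
    lra. }
  assert (HW: Rv^2*rho <= (rho - 1 + Rv)^2).
  { replace ((rho - 1 + Rv)^2) with (Rv^2*rho + ((rho-1)^2 + Rv*((rho-1)*(2-Rv)))) by ring.
    assert (0 <= (rho-1)^2) by apply pow2_ge_0.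
    assert (0 <= (rho-1)*(2-Rv)). { apply Rmult_le_pos; lra. }
    assert (0 <= Rv*((rho-1)*(2-Rv))) by (apply Rmult_le_pos; lra). lra. }
  assert (HW0: 0 <= rho - 1 + Rv) by lra.
  destruct (Rle_or_lt V (rho - 1 + Rv)); [lra|].
  assert ((rho - 1 + Rv)*(rho - 1 + Rv) < V*V) by (apply Rmult_le_0_lt_compat; lra).
  replace ((rho-1+Rv)^2) with ((rho-1+Rv)*(rho-1+Rv)) in HW by ring. lra.
Qed.

Lemma core_F : forall x y, x*x+y*y = 1 -> gg A B m l P Q * Rabs (m-y) <= (A-x)*(B-x)+(m-y)^2.
Proof.
  intros x y Hxy.
  destruct (Rle_or_lt m y) as [Hy|Hy].
  - rewrite Rabs_left1 by lra. pose proof (core_G x y ltac:(lra)). nra.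
  - rewrite Rabs_right by lra. pose proof (core_G x (2*m-y) ltac:(nra)). nra.
Qed.

Lemma core_ex : exists x y, x*x+y*y = 1 /\ gg A B m l P Q * Rabs (m-y) = (A-x)*(B-x)+(m-y)^2.
Proof.
  pose proof core_tang as Ht. pose proof core_R as [HR1 HR2].
  set (g := gg A B m l P Q) in *. set (Rv := RR A B m l P Q) in *.
  exists ((A+B)/Rv), ((2*m+g)/Rv).
  assert (Hn: ((A+B)/Rv)*((A+B)/Rv) + ((2*m+g)/Rv)*((2*m+g)/Rv) = 1).
  { replace (((A+B)/Rv)*((A+B)/Rv) + ((2*m+g)/Rv)*((2*m+g)/Rv)) with (((A+B)^2 + (2*m+g)^2)/Rv^2) by (field; lra).
    rewrite <- Ht. field. lra. }
  split; auto.
  assert (Hy: m * Rv <= 2*m+g).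
  { assert (0 <= P*Q) by nra. assert (0 < l*l) by nra.
    assert (E: 2*m + g - m*Rv = P*Q).
    { assert (E0: 2*m + g - m*Rv - P*Q = (1 - m*m - l*l)*(m+g)).
      { unfold Rv, RR. fold g. unfold g, gg. field. lra. }
      replace (1 - m*m - l*l) with 0 in E0 by lra. lra. }
    lra. }
  assert (Hy2: m <= (2*m+g)/Rv).
  { apply Rmult_le_reg_r with Rv; auto. unfold Rdiv. rewrite Rmult_assoc, Rinv_l by lra. lra. }
  rewrite Rabs_left1 by lra.
  assert (E2: (A-(A+B)/Rv)*(B-(A+B)/Rv) + (m-(2*m+g)/Rv)^2 - g*(-(m-(2*m+g)/Rv))
     = (((A+B)/Rv)*((A+B)/Rv) + ((2*m+g)/Rv)*((2*m+g)/Rv)) - 1 + (A*B+m*m+1+g*m) - ((A+B)*((A+B)/Rv) + (2*m+g)*((2*m+g)/Rv))).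
  { field. lra. }
  replace (A*B+m*m+1+g*m) with Rv in E2 by reflexivity.
  rewrite Hn in E2.
  replace ((A+B)*((A+B)/Rv) + (2*m+g)*((2*m+g)/Rv)) with (((A+B)^2 + (2*m+g)^2)/Rv) in E2 by (field; lra).
  rewrite <- Ht in E2. replace (1 - 1 + Rv - Rv^2/Rv) with 0 in E2 by (field; lra).
  lra.
Qed.
End Core.


Lemma cos_2atan (T : R) : cos (2 * atan T) = (1 - T^2)/(1+T^2).
Proof.
  replace (2 * atan T) with (atan T + atan T) by ring.
  rewrite cos_plus.
  assert (Hc := cos_atan T).
  assert (Hs: sin (atan T) = T * cos (atan T)).
  { assert (Hc0: cos (atan T) <> 0).
    { rewrite Hc. assert (0 < sqrt (1 + T²)) by (apply sqrt_lt_R0; pose proof (Rle_0_sqr T); lra).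
      apply Rgt_not_eq. apply Rdiv_lt_0_compat; lra. }
    pose proof (tan_atan T) as Ht. unfold tan in Ht. rewrite <- Ht at 2. field. auto. }
  rewrite Hs, Hc.
  assert (Hq: sqrt (1 + T²) * sqrt (1 + T²) = 1 + T²).
  { apply sqrt_sqrt. pose proof (Rle_0_sqr T); lra. }
  assert (0 < sqrt (1 + T²)) by (apply sqrt_lt_R0; pose proof (Rle_0_sqr T); lra).
  unfold Rsqr in *.
  replace (1 / sqrt (1 + T * T) * (1 / sqrt (1 + T * T)) - T * (1 / sqrt (1 + T * T)) * (T * (1 / sqrt (1 + T * T))))
    with ((1 - T*T) / (sqrt (1 + T * T) * sqrt (1 + T * T))) by (field; lra).
  rewrite Hq. field. nra.
Qed.

Lemma atan_pos_bound (T : R) : 0 < T -> 0 < 2 * atan T < PI.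
Proof.
  intros HT. pose proof (atan_bound T). pose proof (atan_increasing 0 T HT).
  rewrite atan_0 in H0. lra.
Qed.

Lemma acos_le_of (x y : R) : -1 <= x <= 1 -> 0 <= y <= PI -> cos y <= x -> acos x <= y.
Proof.
  intros Hx Hy Hc.
  destruct (Rle_or_lt (acos x) y); auto.
  pose proof (acos_bound x).
  assert (cos (acos x) < cos y) by (apply cos_decreasing_1; lra).
  rewrite cos_acos in H1 by lra. lra.
Qed.

Section Ang.
Variables T D X N : R.
Hypotheses (HT : 0 < T) (HN : 0 < N) (HX : 0 <= X) (HNe : N*N = D*D + X*X).

Lemma DN_bound : -1 <= D/N <= 1.
Proof.
  assert (Hd: D*D <= N*N) by nra.
  split.
  - apply (Rmult_le_reg_r N); auto. unfold Rdiv. rewrite Rmult_assoc, Rinv_l by lra. nra.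
  - apply (Rmult_le_reg_r N); auto. unfold Rdiv. rewrite Rmult_assoc, Rinv_l by lra. nra.
Qed.

Lemma angle_le : (1 - T^2)/(2*T) * X <= D -> acos (D/N) <= 2 * atan T.
Proof.
  intros Hc. set (c := (1 - T^2)/(2*T)) in *.
  apply acos_le_of. apply DN_bound. pose proof (atan_pos_bound T HT); lra.
  rewrite cos_2atan.
  assert (Hk: (1 - T^2)/(1+T^2) = c * (2*T/(1+T^2))) by (unfold c; field; nra).
  assert (Hs: (1+T^2)/(2*T) * ((1+T^2)/(2*T)) = c*c + 1) by (unfold c; field; lra).
  set (r := (1+T^2)/(2*T)) in *.
  assert (Hr: 0 < r) by (unfold r; apply Rdiv_lt_0_compat; nra).
  replace (2*T/(1+T^2)) with (1/r) in Hk by (unfold r; field; nra).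
  rewrite Hk.
  assert (Key: c * N <= r * D).
  { destruct (Rle_or_lt 0 c) as [Hc0|Hc0].
    - assert (0 <= c*X) by (apply Rmult_le_pos; lra). assert (0 <= D) by lra.
      assert ((c*N)*(c*N) <= (r*D)*(r*D)).
      { replace ((c*N)*(c*N)) with (c*c*(D*D+X*X)) by (rewrite <- HNe; ring).
        replace ((r*D)*(r*D)) with ((r*r)*(D*D)) by ring. rewrite Hs.
        assert (c*X*(c*X) <= D*D) by nra. nra. }
      assert (0 <= r*D) by nra.
      destruct (Rle_or_lt (c*N) (r*D)); auto.
      assert ((r*D)*(r*D) < (c*N)*(c*N)) by (apply Rmult_le_0_lt_compat; lra). lra.
    - destruct (Rle_or_lt 0 D) as [HD|HD].
      + assert (c*N < 0) by nra. nra.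
      +
        assert (D*D <= (c*X)*(c*X)) by nra.
        assert ((r*D)*(r*D) <= (c*N)*(c*N)).
        { replace ((c*N)*(c*N)) with (c*c*(D*D+X*X)) by (rewrite <- HNe; ring).
          replace ((r*D)*(r*D)) with ((r*r)*(D*D)) by ring. rewrite Hs. nra. }
        assert (r*D < 0) by nra. assert (c*N < 0) by nra.
        nra. }
  apply (Rmult_le_reg_r (r*N)). nra.
  replace (c*(1/r)*(r*N)) with (c*N) by (field; lra).
  replace (D/N*(r*N)) with (r*D) by (field; lra). lra.
Qed.

Lemma angle_eq : (1 - T^2)/(2*T) * X = D -> acos (D/N) = 2 * atan T.
Proof.
  intros Hc. set (c := (1 - T^2)/(2*T)) in *.
  assert (Hs: (1+T^2)/(2*T) * ((1+T^2)/(2*T)) = c*c + 1) by (unfold c; field; lra).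
  set (r := (1+T^2)/(2*T)) in *.
  assert (Hr: 0 < r) by (unfold r; apply Rdiv_lt_0_compat; nra).
  assert (HN2: N*N = (r*X)*(r*X)) by (rewrite HNe, <- Hc; replace ((r*X)*(r*X)) with ((r*r)*(X*X)) by ring; rewrite Hs; ring).
  assert (HNr: N = r*X).
  { assert (0 <= r*X) by nra.
    destruct (Rtotal_order N (r*X)) as [h|[h|h]]; auto.
    - assert (N*N < (r*X)*(r*X)) by (apply Rmult_le_0_lt_compat; lra). lra.
    - assert ((r*X)*(r*X) < N*N) by (apply Rmult_le_0_lt_compat; lra). lra. }
  assert (HX0: 0 < X) by nra.
  replace (D/N) with (cos (2 * atan T)).
  apply acos_cos. pose proof (atan_pos_bound T HT); lra.
  rewrite cos_2atan, <- Hc, HNr. unfold c, r. field. split; nra.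
Qed.
End Ang.


Lemma th_ln (P Q : R) : 0 < P -> 0 < Q -> th (ln (P*P/(Q*Q)) / 4) = (P-Q)/(P+Q).
Proof.
  intros HP HQ.
  assert (Hr: 0 < P/Q) by (apply Rdiv_lt_0_compat; auto).
  replace (P*P/(Q*Q)) with ((P/Q)*(P/Q)) by (field; lra).
  rewrite ln_mult by auto.
  set (y := (ln (P/Q) + ln (P/Q))/4).
  assert (Hy: exp y * exp y = P/Q).
  { rewrite <- exp_plus. replace (y+y) with (ln (P/Q)) by (unfold y; field). apply exp_ln; auto. }
  unfold th. rewrite exp_Ropp.
  pose proof (exp_pos y).
  replace ((exp y - / exp y) / (exp y + / exp y)) with ((exp y * exp y - 1)/(exp y * exp y + 1)) by (field; split; nra).
  rewrite Hy. field. lra.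
Qed.

Lemma sqrt_ratio (m l : R) : 0 <= m -> 0 < l -> l*l + m*m = 1 -> sqrt (1+m) / sqrt (1-m) = (1+m)/l.
Proof.
  intros Hm Hl Hlm.
  assert (m < 1) by nra.
  assert (Hs: l = sqrt (1-m) * sqrt (1+m)).
  { rewrite <- sqrt_mult by lra. replace ((1-m)*(1+m)) with (l*l) by lra.
    rewrite sqrt_square; lra. }
  assert (h1: 0 < sqrt (1-m)) by (apply sqrt_lt_R0; lra).
  assert (h2: 0 < sqrt (1+m)) by (apply sqrt_lt_R0; lra).
  assert (h3: sqrt (1+m) * sqrt (1+m) = 1+m) by (apply sqrt_sqrt; lra).
  rewrite Hs.
  replace ((1+m)/(sqrt(1-m)*sqrt(1+m))) with ((sqrt(1+m)*sqrt(1+m))/(sqrt(1-m)*sqrt(1+m))) by (rewrite h3; reflexivity).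
  field. lra.
Qed.


Section Frame.
Variables u1 u2 v1 v2 : R.
Hypotheses (Hu: u1*u1+u2*u2 = 1) (Hv: v1*v1+v2*v2 = 1) (Huv: (u1,u2) <> (v1,v2)).

Definition LL := (v1-u1)*(v1-u1)+(v2-u2)*(v2-u2).
Lemma LL_pos : 0 < LL.
Proof.
  unfold LL. destruct (Rle_or_lt ((v1-u1)*(v1-u1)+(v2-u2)*(v2-u2)) 0); auto.
  exfalso. apply Huv.
  assert (h1: Rsqr (v1-u1) = 0) by (unfold Rsqr; pose proof (Rle_0_sqr (v1-u1)); pose proof (Rle_0_sqr (v2-u2)); unfold Rsqr in *; lra).
  assert (h2: Rsqr (v2-u2) = 0) by (unfold Rsqr; pose proof (Rle_0_sqr (v1-u1)); pose proof (Rle_0_sqr (v2-u2)); unfold Rsqr in *; lra).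
  apply Rsqr_0_uniq in h1. apply Rsqr_0_uniq in h2. f_equal; lra.
Qed.
Definition L := sqrt LL.
Lemma L_pos : 0 < L.
Proof. apply sqrt_lt_R0, LL_pos. Qed.
Lemma LL_L : L*L = LL.
Proof. apply sqrt_sqrt. pose proof LL_pos; lra. Qed.
Definition dd := u1*v1+u2*v2.
Lemma LL_dd : LL = 2 - 2*dd.
Proof. unfold LL, dd. lra. Qed.
Definition l := L/2.
Definition cc := (v1-u1)/L.
Definition ss := (v2-u2)/L.
Definition jj := (u2*v1-u1*v2)/L.
Definition sg := if Rle_dec 0 jj then 1 else -1.
Definition m := sg*jj.
Lemma sg2 : sg*sg = 1.
Proof. unfold sg. destruct (Rle_dec 0 jj); lra. Qed.
Lemma m_nonneg : 0 <= m.
Proof. unfold m, sg. destruct (Rle_dec 0 jj); lra. Qed.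
Lemma l_pos : 0 < l.
Proof. unfold l. pose proof L_pos. lra. Qed.
Lemma cs1 : cc*cc+ss*ss = 1.
Proof. pose proof L_pos. pose proof LL_L. unfold cc, ss.
  replace ((v1 - u1) / L * ((v1 - u1) / L) + (v2 - u2) / L * ((v2 - u2) / L)) with (LL/(L*L)) by (unfold LL; field; lra).
  rewrite H0. field. pose proof LL_pos. lra. Qed.
Lemma lm1 : l*l + m*m = 1.
Proof.
  pose proof L_pos. pose proof LL_L. pose proof sg2.
  assert (Hm: m*m = (u2*v1-u1*v2)*(u2*v1-u1*v2)/(L*L)).
  { unfold m, jj. replace (sg * ((u2 * v1 - u1 * v2) / L) * (sg * ((u2 * v1 - u1 * v2) / L))) with
      ((sg*sg) * ((u2*v1-u1*v2)*(u2*v1-u1*v2)/(L*L))) by (field; lra). rewrite H1. ring. }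
  assert (Hj: (u2*v1-u1*v2)*(u2*v1-u1*v2) = (1-dd)*(1+dd)).
  { replace ((u2*v1-u1*v2)*(u2*v1-u1*v2)) with ((u1*u1+u2*u2)*(v1*v1+v2*v2) - dd*dd) by (unfold dd; ring).
    rewrite Hu, Hv. ring. }
  rewrite Hm, Hj, H0, LL_dd. unfold l. replace (L/2*(L/2)) with ((L*L)/4) by field.
  rewrite H0, LL_dd. assert (1 - dd <> 0). { pose proof LL_pos. rewrite LL_dd in H2. lra. }
  field. lra.
Qed.

Definition X1 (p : pt) := fst p * cc + snd p * ss.
Definition Y1 (p : pt) := sg*(- fst p * ss + snd p * cc).
Lemma dot_frame p q : dot p q = X1 p * X1 q + Y1 p * Y1 q.
Proof.
  unfold dot, X1, Y1. pose proof cs1. pose proof sg2.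
  replace ((fst p * cc + snd p * ss) * (fst q * cc + snd q * ss) +
   sg * (- fst p * ss + snd p * cc) * (sg * (- fst q * ss + snd q * cc))) with
   ((fst p * cc + snd p * ss) * (fst q * cc + snd q * ss) +
   (sg*sg) * ((- fst p * ss + snd p * cc) * (- fst q * ss + snd q * cc))) by ring.
  rewrite H0. replace (fst p * fst q + snd p * snd q) with ((fst p * fst q + snd p * snd q)*(cc*cc+ss*ss)) by (rewrite H; ring).
  ring.
Qed.
Lemma X1_sub p q : X1 (psub p q) = X1 p - X1 q.
Proof. unfold X1, psub; simpl; ring. Qed.
Lemma Y1_sub p q : Y1 (psub p q) = Y1 p - Y1 q.
Proof. unfold Y1, psub; simpl; ring. Qed.

Definition lp (t : R) : pt := (u1 + t*(v1-u1), u2 + t*(v2-u2)).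
Lemma X1_lp t : X1 (lp t) = l*(2*t-1).
Proof.
  pose proof L_pos. pose proof LL_L.
  unfold X1, lp, cc, ss, l; simpl.
  assert (Hn: (u1 + t*(v1-u1))*(v1-u1) + (u2+t*(v2-u2))*(v2-u2) = (t - 1/2)*(L*L)).
  { rewrite H0. unfold LL. lra. }
  replace ((u1 + t * (v1 - u1)) * ((v1 - u1) / L) + (u2 + t * (v2 - u2)) * ((v2 - u2) / L))
    with (((u1 + t*(v1-u1))*(v1-u1) + (u2+t*(v2-u2))*(v2-u2))/L) by (field; lra).
  rewrite Hn. field. lra.
Qed.
Lemma Y1_lp t : Y1 (lp t) = m.
Proof.
  pose proof L_pos. unfold Y1, lp, m, jj, cc, ss; simpl. field. lra.
Qed.
Lemma lp0 : lp 0 = (u1,u2).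
Proof. unfold lp. f_equal; ring. Qed.
Lemma lp1 : lp 1 = (v1,v2).
Proof. unfold lp. f_equal; ring. Qed.


Variables al be : R.
Hypotheses (Hal: 0 < al) (Hab: al < be) (Hbe: be < 1).

Definition A := l*(2*al-1).
Definition B := l*(2*be-1).
Definition P := sqrt ((l+B)*(l-A)).
Definition Q := sqrt ((l+A)*(l-B)).
Definition T := (1+m)*(P-Q)/(l*(P+Q)).

Lemma AB_bounds : -l < A /\ A < B /\ B < l.
Proof. pose proof l_pos. unfold A, B. nra. Qed.

Lemma PQ_facts : 0 < P /\ 0 < Q /\ P*P = (l+B)*(l-A) /\ Q*Q = (l+A)*(l-B) /\ Q < P.
Proof.
  pose proof AB_bounds as [h1 [h2 h3]]. pose proof l_pos.
  assert (0 < (l+B)*(l-A)) by nra. assert (0 < (l+A)*(l-B)) by nra.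
  unfold P, Q. repeat split.
  - apply sqrt_lt_R0; auto.
  - apply sqrt_lt_R0; auto.
  - apply sqrt_sqrt; lra.
  - apply sqrt_sqrt; lra.
  - apply sqrt_lt_1; try lra. nra.
Qed.

Lemma T_pos : 0 < T.
Proof.
  pose proof PQ_facts as [h1 [h2 [_ [_ h5]]]]. pose proof l_pos. pose proof m_nonneg.
  unfold T. apply Rdiv_lt_0_compat; nra.
Qed.

Lemma c_rel : (1 - T^2)/(2*T) = gg A B m l P Q / (B - A).
Proof.
  pose proof PQ_facts as [h1 [h2 [h3 [h4 h5]]]]. pose proof l_pos. pose proof m_nonneg.
  pose proof AB_bounds as [k1 [k2 k3]]. pose proof T_pos. pose proof lm1.
  pose proof (T_id P Q l m ltac:(lra) ltac:(lra) ltac:(lra)) as HT.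
  fold T in HT.
  assert (E1: (P*Q - m*((P*P+Q*Q)/2))/(l*l) = gg A B m l P Q).
  { unfold gg. rewrite h3, h4. field. lra. }
  assert (E2: (P*P-Q*Q)/(2*l) = B - A).
  { rewrite h3, h4. field. lra. }
  rewrite E1, E2 in HT.
  apply (Rmult_eq_reg_r (2*T*(B-A))). 2: nra.
  replace ((1 - T^2)/(2*T) * (2*T*(B-A))) with ((B-A)*(1-T^2)) by (field; lra).
  rewrite <- HT. field. lra.
Qed.

Lemma circle_xy (z : pt) : on_circle z -> X1 z * X1 z + Y1 z * Y1 z = 1.
Proof.
  unfold on_circle, enorm. intros H. rewrite <- dot_frame.
  assert (0 <= dot z z) by (unfold dot; nra).
  rewrite <- (sqrt_sqrt (dot z z)) by auto. rewrite H. ring.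
Qed.

Lemma abs_sq (x : R) : Rabs x * Rabs x = x * x.
Proof. rewrite <- Rabs_mult. apply Rabs_pos_eq. nra. Qed.

Lemma pos_sq2 (p q r s : R) : p*p+q*q <> r*r+s*s -> 0 < (p-r)*(p-r)+(q-s)*(q-s).
Proof.
  intros H. destruct (Rle_or_lt ((p-r)*(p-r)+(q-s)*(q-s)) 0); auto.
  exfalso. apply H.
  assert (h1: Rsqr (p-r) = 0) by (pose proof (Rle_0_sqr (p-r)); pose proof (Rle_0_sqr (q-s)); unfold Rsqr in *; lra).
  assert (h2: Rsqr (q-s) = 0) by (pose proof (Rle_0_sqr (p-r)); pose proof (Rle_0_sqr (q-s)); unfold Rsqr in *; lra).
  apply Rsqr_0_uniq in h1. apply Rsqr_0_uniq in h2.
  replace p with r by lra. replace q with s by lra. auto.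
Qed.

Lemma angle_frame (z : pt) : angle (lp al) z (lp be) =
  acos (((A - X1 z)*(B - X1 z) + (m - Y1 z)*(m - Y1 z)) /
        (sqrt ((A - X1 z)*(A - X1 z) + (m - Y1 z)*(m - Y1 z)) * sqrt ((B - X1 z)*(B - X1 z) + (m - Y1 z)*(m - Y1 z)))).
Proof.
  unfold angle, enorm. rewrite !dot_frame, !X1_sub, !Y1_sub, !X1_lp, !Y1_lp. reflexivity.
Qed.

Lemma angle_xy (x y : R) : x*x+y*y = 1 ->
  let N := sqrt ((A - x)*(A - x) + (m - y)*(m - y)) * sqrt ((B - x)*(B - x) + (m - y)*(m - y)) in
  let D := (A - x)*(B - x) + (m - y)*(m - y) in
  let X := (B - A) * Rabs (m - y) in
  0 < N /\ 0 <= X /\ N*N = D*D + X*X /\ (1 - T^2)/(2*T) * X = gg A B m l P Q * Rabs (m-y).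
Proof.
  intros Hxy N D X.
  pose proof AB_bounds as [k1 [k2 k3]]. pose proof lm1. pose proof l_pos. pose proof m_nonneg.
  assert (hA: 0 < (A - x)*(A - x) + (m - y)*(m - y)).
  { apply (pos_sq2 A m x y). nra. }
  assert (hB: 0 < (B - x)*(B - x) + (m - y)*(m - y)).
  { apply (pos_sq2 B m x y). nra. }
  repeat split.
  - unfold N. apply Rmult_lt_0_compat; apply sqrt_lt_R0; auto.
  - unfold X. apply Rmult_le_pos. lra. apply Rabs_pos.
  - unfold N. replace (sqrt ((A - x) * (A - x) + (m - y) * (m - y)) * sqrt ((B - x) * (B - x) + (m - y) * (m - y)) *
      (sqrt ((A - x) * (A - x) + (m - y) * (m - y)) * sqrt ((B - x) * (B - x) + (m - y) * (m - y))))
      with ((sqrt ((A - x) * (A - x) + (m - y) * (m - y)) * sqrt ((A - x) * (A - x) + (m - y) * (m - y))) *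
            (sqrt ((B - x) * (B - x) + (m - y) * (m - y)) * sqrt ((B - x) * (B - x) + (m - y) * (m - y)))) by ring.
    rewrite !sqrt_sqrt by lra. unfold D, X.
    replace ((B - A) * Rabs (m - y) * ((B - A) * Rabs (m - y))) with ((B-A)*(B-A)*(Rabs (m-y) * Rabs (m-y))) by ring.
    rewrite abs_sq. ring.
  - unfold X. rewrite c_rel. field. lra.
Qed.

Lemma ang_ub (z : pt) : on_circle z -> angle (lp al) z (lp be) <= 2 * atan T.
Proof.
  intros Hz. rewrite angle_frame. pose proof (circle_xy z Hz) as Hxy.
  pose proof (angle_xy (X1 z) (Y1 z) Hxy) as [h1 [h2 [h3 h4]]]. cbv zeta in h1, h2, h3, h4.
  pose proof PQ_facts as [p1 [p2 [p3 [p4 p5]]]]. pose proof AB_bounds as [k1 [k2 k3]].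
  apply (angle_le T _ ((B - A) * Rabs (m - Y1 z))); auto. apply T_pos.
  rewrite h4.
  pose proof (core_F A B m l P Q l_pos m_nonneg lm1 k1 k2 k3 ltac:(lra) ltac:(lra) p3 p4 (X1 z) (Y1 z) Hxy) as HF.
  replace ((m - Y1 z)^2) with ((m-Y1 z)*(m - Y1 z)) in HF by ring. exact HF.
Qed.

Lemma ang_att : exists z, on_circle z /\ angle (lp al) z (lp be) = 2 * atan T.
Proof.
  pose proof PQ_facts as [p1 [p2 [p3 [p4 p5]]]]. pose proof AB_bounds as [k1 [k2 k3]].
  destruct (core_ex A B m l P Q l_pos m_nonneg lm1 k1 k2 k3 ltac:(lra) ltac:(lra) p3 p4) as [x [y [Hxy He]]].
  pose proof cs1. pose proof sg2.
  set (z := (x*cc - sg*y*ss, x*ss + sg*y*cc)).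
  assert (hx: X1 z = x). { unfold X1, z; simpl. replace (x*cc*cc + x*ss*ss) with (x*(cc*cc+ss*ss)) by ring.
     replace ((x * cc - sg * y * ss) * cc + (x * ss + sg * y * cc) * ss) with (x*(cc*cc+ss*ss)) by ring. rewrite H; ring. }
  assert (hy: Y1 z = y). { unfold Y1, z; simpl.
     replace (sg * (- (x * cc - sg * y * ss) * ss + (x * ss + sg * y * cc) * cc)) with ((sg*sg)*y*(cc*cc+ss*ss)) by ring.
     rewrite H, H0; ring. }
  exists z. split.
  - unfold on_circle, enorm. rewrite dot_frame, hx, hy, Hxy. apply sqrt_1.
  - rewrite angle_frame, hx, hy.
    pose proof (angle_xy x y Hxy) as [h1 [h2 [h3 h4]]]. cbv zeta in h1, h2, h3, h4.
    apply (angle_eq T _ ((B - A) * Rabs (m - y))); auto. apply T_pos. rewrite h4, He. ring.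
Qed.

Lemma visual_val : visual_angle (lp al) (lp be) = 2 * atan T.
Proof.
  unfold visual_angle.
  rewrite (is_lub_Rbar_unique _ (Finite (2 * atan T))). reflexivity.
  split.
  - intros r [z [Hz ->]]. simpl. apply ang_ub; auto.
  - intros b Hb. destruct ang_att as [z [Hz Ha]]. apply Hb. exists z. split; auto.
Qed.


Lemma enorm_lp t : enorm (lp t) = sqrt ((l*(2*t-1))*(l*(2*t-1)) + m*m).
Proof. unfold enorm. rewrite dot_frame, X1_lp, Y1_lp. reflexivity. Qed.

Lemma dist0_val : dist0_line (lp al) (lp be) = m.
Proof.
  pose proof m_nonneg.
  unfold dist0_line.
  rewrite (is_glb_Rbar_unique _ (Finite m)). reflexivity.
  split.
  - intros r [p [[t Hp] ->]]. simpl.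
    assert (Hp2: p = lp (al + t*(be-al))). { rewrite Hp. unfold lp; simpl. f_equal; ring. }
    rewrite Hp2, enorm_lp. apply Rle_trans with (sqrt (m*m)).
    rewrite sqrt_square; lra.
    apply sqrt_le_1_alt. pose proof (Rle_0_sqr (l * (2 * (al + t * (be - al)) - 1))). unfold Rsqr in *. lra.
  - intros b0 Hb. 
    assert (Hm: enorm (lp (1/2)) = m).
    { rewrite enorm_lp. replace (l * (2 * (1/2) - 1) * (l * (2 * (1/2) - 1)) + m * m) with (m*m) by field.
      apply sqrt_square; auto. }
    rewrite <- Hm. apply Hb. exists (lp (1/2)). split; auto.
    exists ((1/2 - al)/(be-al)). unfold lp; simpl. f_equal; field; lra.
Qed.

Lemma edist_lp s t : s <= t -> edist (lp s) (lp t) = 2*l*(t-s) /\ edist (lp t) (lp s) = 2*l*(t-s).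
Proof.
  intros Hst. pose proof l_pos. unfold edist, enorm.
  rewrite !dot_frame, !X1_sub, !Y1_sub, !X1_lp, !Y1_lp. split.
  - replace ((l * (2 * s - 1) - l * (2 * t - 1)) * (l * (2 * s - 1) - l * (2 * t - 1)) + (m - m) * (m - m))
      with ((2*l*(t-s))*(2*l*(t-s))) by ring. apply sqrt_square. nra.
  - replace ((l * (2 * t - 1) - l * (2 * s - 1)) * (l * (2 * t - 1) - l * (2 * s - 1)) + (m - m) * (m - m))
      with ((2*l*(t-s))*(2*l*(t-s))) by ring. apply sqrt_square. nra.
Qed.

Lemma hilbert_val : hilbert_formula (lp al) (lp be) (lp 0) (lp 1) = ln (P*P/(Q*Q)).
Proof.
  pose proof PQ_facts as [p1 [p2 [p3 [p4 p5]]]]. pose proof l_pos.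
  unfold hilbert_formula.
  destruct (edist_lp 0 be ltac:(lra)) as [e1 _].
  destruct (edist_lp al 1 ltac:(lra)) as [e2 _].
  destruct (edist_lp 0 al ltac:(lra)) as [e3 _].
  destruct (edist_lp be 1 ltac:(lra)) as [e4 _].
  rewrite e1, e2, e3, e4, p3, p4. f_equal. unfold A, B. field. split; nra.
Qed.

Lemma main_frame : tan (visual_angle (lp al) (lp be) / 2) =
    sqrt (1 + dist0_line (lp al) (lp be)) / sqrt (1 - dist0_line (lp al) (lp be))
    * th (hilbert_formula (lp al) (lp be) (u1,u2) (v1,v2) / 4).
Proof.
  pose proof PQ_facts as [p1 [p2 [p3 [p4 p5]]]]. pose proof l_pos.
  rewrite visual_val, dist0_val, <- lp0, <- lp1, hilbert_val.
  rewrite (sqrt_ratio m l m_nonneg l_pos lm1), th_ln by auto.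
  replace (2 * atan T / 2) with (atan T) by field. rewrite tan_atan.
  unfold T. field. split; lra.
Qed.

End Frame.


Lemma sqrt_eq1 x : sqrt x = 1 -> x = 1.
Proof.
  intros H. destruct (Rle_or_lt 0 x).
  - rewrite <- (sqrt_sqrt x) by auto. rewrite H. ring.
  - rewrite sqrt_neg_0 in H by lra. lra.
Qed.

Lemma sqrt_lt1 x : sqrt x < 1 -> x < 1.
Proof.
  intros H. destruct (Rlt_or_le x 1); auto.
  assert (sqrt 1 <= sqrt x) by (apply sqrt_le_1_alt; auto). rewrite sqrt_1 in H1. lra.
Qed.

Theorem theorem1p1 (a b u v : pt) :
  in_disk a -> in_disk b -> a <> b ->
  hilbert_endpoints a b u v ->
  tan (visual_angle a b / 2) =
    sqrt (1 + dist0_line a b) / sqrt (1 - dist0_line a b)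
    * th (hilbert_formula a b u v / 4).
Proof.
  intros Ha Hb _ [HuL [HvL [Huc [Hvc [Huv Hua]]]]].
  destruct u as [u1 u2], v as [v1 v2].
  assert (Hu: u1*u1+u2*u2 = 1) by (apply sqrt_eq1; exact Huc).
  assert (Hv: v1*v1+v2*v2 = 1) by (apply sqrt_eq1; exact Hvc).
  destruct HuL as [t1 Ht1]. destruct HvL as [t2 Ht2].
  destruct a as [a1 a2], b as [b1 b2]. simpl in Ht1, Ht2.
  injection Ht1 as e1 e2. injection Ht2 as e3 e4.
  assert (Ht: t2 - t1 <> 0).
  { intros h. apply Huv. rewrite e1, e2, e3, e4. replace t2 with t1 by lra. reflexivity. }
  set (al := -t1/(t2-t1)). set (be := (1-t1)/(t2-t1)).
  assert (Ea: (a1,a2) = lp u1 u2 v1 v2 al).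
  { unfold lp, al. rewrite e1, e2, e3, e4. f_equal; field; auto. }
  assert (Eb: (b1,b2) = lp u1 u2 v1 v2 be).
  { unfold lp, be. rewrite e1, e2, e3, e4. f_equal; field; auto. }
  rewrite Ea, Eb in *. clear Ea Eb e1 e2 e3 e4.
  pose proof (lm1 u1 u2 v1 v2 Hu Hv Huv) as Hlm. pose proof (l_pos u1 u2 v1 v2 Huv) as Hl.
  assert (Hdisk: forall t, in_disk (lp u1 u2 v1 v2 t) -> 0 < t < 1).
  { intros t Ht0. unfold in_disk in Ht0. rewrite (enorm_lp u1 u2 v1 v2 Hu Hv Huv) in Ht0.
    apply sqrt_lt1 in Ht0. nra. }
  destruct (Hdisk al Ha) as [ha1 ha2]. destruct (Hdisk be Hb) as [hb1 hb2].
  assert (Hab: al < be).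
  { rewrite <- (lp0 u1 u2 v1 v2) in Hua.
    destruct (edist_lp u1 u2 v1 v2 Hu Hv Huv 0 al ltac:(lra)) as [f1 _].
    destruct (edist_lp u1 u2 v1 v2 Hu Hv Huv 0 be ltac:(lra)) as [f2 _].
    rewrite f1, f2 in Hua. nra. }
  apply main_frame; auto.
Qed.
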